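(* Let $k\ge 2$ be a constant integer. Any algorithm that, for every $n$-variable $(k,1,0)$-CNF formula $\Phi$, exactly learns $\Phi$ from i.i.d. uniform random solutions of $\Phi$ with probability at least $\frac13$ requires $\Omega_k(\log n)$ samples.
   Context: A $(k,d,s)$-CNF formula on variable set $V$ is a CNF formula in which every clause contains exactly $k$ distinct variables, every variable appears in at most $d$ clauses, and any two distinct clauses share at most $s$ variables (so a $(k,1,0)$-CNF formula has pairwise disjoint clauses). $\mu_\Phi$ denotes the uniform distribution over satisfying assignments of $\Phi$. Exactly learning $\Phi$ means outputting, from i.i.d. samples of $\mu_\Phi$, a CNF formula $\widehat\Phi$ with $\mu_{\widehat\Phi}=\mu_\Phi$ (the same set of satisfying assignments). *)

(* Defs.v *)
From HB Require Import structures.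
From mathcomp Require Import all_boot all_order all_algebra.
From mathcomp Require Import reals.
Set Implicit Arguments. Unset Strict Implicit. Unset Printing Implicit Defensive.
Import Order.TTheory GRing.Theory Num.Theory.
Local Open Scope ring_scope.

Definition assignment (n : nat) := {ffun 'I_n -> bool}.
(* A literal (v, b): b = true is the positive literal v, b = false is ~v. *)
Definition literal (n : nat) := ('I_n * bool)%type.
Definition clause (n : nat) := seq (literal n).
Definition cnf (n : nat) := seq (clause n).

Definition lit_sat n (a : assignment n) (l : literal n) : bool := a l.1 == l.2.
Definition clause_sat n (a : assignment n) (C : clause n) : bool := has (lit_sat a) C.
Definition cnf_sat n (a : assignment n) (Phi : cnf n) : bool := all (clause_sat a) Phi.

Definition clause_vars n (C : clause n) : seq 'I_n := map fst C.

Definition kds_cnf (k d s : nat) n (Phi : cnf n) : Prop :=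
  [/\ (forall C, C \in Phi -> uniq (clause_vars C) /\ size (clause_vars C) = k),
      (forall v : 'I_n, (count (fun C => v \in clause_vars C) Phi <= d)%N) &
      (forall i j : nat, (i < size Phi)%N -> (j < size Phi)%N -> i <> j ->
         (#|[pred v : 'I_n | (v \in clause_vars (nth [::] Phi i))
                             && (v \in clause_vars (nth [::] Phi j))]| <= s)%N)].

Definition sols n (Phi : cnf n) : {set assignment n} := [set a | cnf_sat a Phi].

Definition mu (R : realType) n (Phi : cnf n) (a : assignment n) : R :=
  if a \in sols Phi then (#|sols Phi|%:R)^-1 else 0.

Definition sample_prob (R : realType) n m (Phi : cnf n)
    (x : m.-tuple (assignment n)) : R :=
  \prod_(i < m) mu R Phi (tnth x i).

(* A (randomized) learner using m samples: internal randomness w drawn from a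
   finite seed space Omega with probability weights p, output formula
   A w x for samples x. *)
Definition prob_weights (R : realType) (Omega : finType) (p : Omega -> R) : Prop :=
  (forall w, 0 <= p w) /\ \sum_(w : Omega) p w = 1.

(* Probability that A exactly learns Phi: output has same satisfying set. *)
Definition success_prob (R : realType) n m (Omega : finType) (p : Omega -> R)
    (A : Omega -> m.-tuple (assignment n) -> cnf n) (Phi : cnf n) : R :=
  \sum_(w : Omega) p w *
    \sum_(x : m.-tuple (assignment n))
       sample_prob R Phi x * (sols (A w x) == sols Phi)%:R.

(* Main.v *)
Require Import Defs.
From HB Require Import structures.
From mathcomp Require Import all_boot all_order all_algebra.
From mathcomp Require Import reals.
From mathcomp Require Import zify.
Import Order.TTheory GRing.Theory Num.Theory.
Set Implicit Arguments. Unset Strict Implicit. Unset Printing Implicit Defensive.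
Local Open Scope ring_scope.

Lemma inner (R : realType) n (I : finType) (Phi : I -> cnf n) (Y : cnf n)
  (f : I -> R) (B : R) :
  injective (fun j => sols (Phi j)) -> 0 <= B -> (forall j, f j <= B) ->
  \sum_(j : I) f j * (sols Y == sols (Phi j))%:R <= B.
Proof.
move=> inj B0 fB.
case: (pickP [pred j | sols Y == sols (Phi j)]) => [j0 /eqP e0 | none].
- rewrite (bigD1 j0) //= e0 eqxx mulr1 big1 ?addr0; first exact: fB.
  move=> j jne. case: eqP => [ej|]; last by rewrite mulr0.
  by move: jne; rewrite (inj _ _ ej) eqxx.
- rewrite big1 // => j _. have := none j. rewrite /= => ->. by rewrite mulr0.
Qed.

Lemma key (R : realType) n m (Omega : finType) (p : Omega -> R)
  (A : Omega -> m.-tuple (assignment n) -> cnf n)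
  (I : finType) (Phi : I -> cnf n) (B : R) :
  prob_weights p ->
  injective (fun j => sols (Phi j)) -> 0 <= B ->
  (forall j (x : m.-tuple (assignment n)), sample_prob R (Phi j) x <= B) ->
  (forall j, 1/3 <= success_prob p A (Phi j)) ->
  #|I|%:R / 3 <= B * #|{: m.-tuple (assignment n)}|%:R.
Proof.
move=> [p0 p1] inj B0 spB succ.
have -> : #|I|%:R / 3 = \sum_(j : I) (1/3 : R).
  by rewrite sumr_const -(mulr_natl (1/3 : R) #|I|) mulrA mulr1.
apply: (le_trans (ler_sum _ (fun j _ => succ j))).
rewrite /success_prob exchange_big /=.
have -> : B * #|{: m.-tuple (assignment n)}|%:R =
   \sum_w p w * (B * #|{: m.-tuple (assignment n)}|%:R).
  by rewrite -mulr_suml p1 mul1r.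
apply: ler_sum => w _.
rewrite -mulr_sumr; apply: ler_wpM2l; first exact: p0.
rewrite exchange_big /=.
have -> : B * #|{: m.-tuple (assignment n)}|%:R =
   \sum_(x : m.-tuple (assignment n)) B.
  by rewrite sumr_const -(mulr_natr B).
apply: ler_sum => x _.
exact: inner.
Qed.
Definition vars (k t : nat) : seq nat := rcons (iota 0 k.-1) (t + k.-1)%N.
Definition cl k n' (t : nat) : clause n'.+1 := [seq (inord i, true) | i <- vars k t].
Definition Phi k n' (t : 'I_(n'.+1 - k.-1)) : cnf n'.+1 := [:: cl k n' t].
Arguments Phi k n' t : clear implicits.
Arguments cl k n' t : clear implicits.
Arguments vars k t : clear implicits.

Lemma vars_lt k n' (t : 'I_(n'.+1 - k.-1)) i : i \in vars k t -> (i < n'.+1)%N.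
Proof.
have ht := ltn_ord t.
rewrite /vars mem_rcons inE mem_iota => /orP [/eqP -> | /andP [_ h]]; lia.
Qed.

Lemma vals_cl k n' (t : 'I_(n'.+1 - k.-1)) :
  map val (clause_vars (cl k n' t)) = vars k t.
Proof.
rewrite /clause_vars /cl -!map_comp -[RHS]map_id; apply/eq_in_map => i hi /=.
by rewrite inordK // (vars_lt hi).
Qed.

Lemma kds_Phi k n' (t : 'I_(n'.+1 - k.-1)) : (2 <= k)%N -> kds_cnf k 1 0 (Phi k n' t).
Proof.
move=> k2; split.
- move=> C; rewrite inE => /eqP ->; split.
    apply: (map_uniq (f := val)); rewrite vals_cl /vars rcons_uniq iota_uniq andbT.
    by rewrite mem_iota; apply/negP => /andP [_ h]; lia.
  by rewrite -(size_map val) vals_cl /vars size_rcons size_iota; lia.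
- by move=> v /=; rewrite addn0 leq_b1.
- by move=> i j /= hi hj; lia.
Qed.

Lemma sat_Phi k n' (t : 'I_(n'.+1 - k.-1)) (a : assignment n'.+1) :
  a (inord (t + k.-1)%N) -> cnf_sat a (Phi k n' t).
Proof.
by move=> h; rewrite /cnf_sat /= andbT /clause_sat /cl /vars map_rcons has_rcons /lit_sat /= h.
Qed.

Definition wit k n' (t : nat) : assignment n'.+1 :=
  [ffun v : 'I_n'.+1 => (k.-1 <= v)%N && (nat_of_ord v != t + k.-1)%N].
Arguments wit k n' t : clear implicits.

Lemma unsat_wit k n' (t : 'I_(n'.+1 - k.-1)) : ~~ cnf_sat (wit k n' t) (Phi k n' t).
Proof.
rewrite /cnf_sat /= andbT /clause_sat; apply/hasPn => l /mapP [i iin ->].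
rewrite /lit_sat /= ffunE (inordK (vars_lt iin)) eqb_id.
move: iin; rewrite /vars mem_rcons inE mem_iota /=.
case/orP => [/eqP -> | h]; first by rewrite eqxx andbF.
by rewrite leqNgt h.
Qed.

Lemma inj_Phi k n' : injective (fun t => sols (Phi k n' t)).
Proof.
move=> t t' E; case: (eqVneq t t') => // ne.
have : wit k n' t \in sols (Phi k n' t').
  rewrite inE; apply: sat_Phi.
  have ht := ltn_ord t'.
  rewrite ffunE inordK; last by lia.
  rewrite leq_addl /= eqn_add2r eq_sym; exact: ne.
by rewrite -E inE (negbTE (unsat_wit t)).
Qed.

Definition fl n (j : 'I_n) (a : assignment n) : assignment n :=
  [ffun v => if v == j then ~~ a v else a v].

Lemma flK n (j : 'I_n) : involutive (fl j).
Proof. by move=> a; apply/ffunP => v; rewrite !ffunE; case: eqP => // ->; rewrite negbK. Qed.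

Lemma card_sols k n' (t : 'I_(n'.+1 - k.-1)) : (2 ^ n' <= #|sols (Phi k n' t)|)%N.
Proof.
set S := sols _.
have sub : (fl (inord (t + k.-1)%N) @: (~: S)) \subset S.
  apply/subsetP => b /imsetP [a]; rewrite inE => aS ->.
  rewrite inE; apply: sat_Phi; rewrite ffunE eqxx.
  apply/negP => h; move/negP: aS; apply; rewrite inE; exact: sat_Phi.
have := subset_leq_card sub.
rewrite card_imset; last exact: (can_inj (flK _)).
have := cardsC S.
rewrite card_ffun card_bool card_ord expnS => h1 h2; clear sub; clearbody S; move: h1 h2; set N := (2 ^ n')%N; set a := #|S|; set b := #|~: S|; lia.
Qed.

Lemma sp_bound (R : realType) k n' m (t : 'I_(n'.+1 - k.-1))
  (x : m.-tuple (assignment n'.+1)) :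
  sample_prob R (Phi k n' t) x <= ((2 ^ n')%:R^-1) ^+ m.
Proof.
rewrite /sample_prob.
apply: (@le_trans _ _ (\prod_(i < m) ((2 ^ n')%:R^-1 : R))); last first.
  by rewrite prodr_const card_ord.
apply: ler_prod => i _; apply/andP; split.
  by rewrite /mu; case: ifP => _ //; rewrite invr_ge0 ler0n.
have h := card_sols t.
rewrite /mu; case: ifP => _; last by rewrite invr_ge0 ler0n.
have h0 : (0 < #|sols (Phi k n' t)|)%N by apply: leq_trans h; rewrite expn_gt0.
by rewrite lef_pV2 ?posrE ?ltr0n ?ler_nat // expn_gt0.
Qed.

Lemma powE (R : realType) n' m :
  ((2 ^ n')%:R^-1) ^+ m * ((2 ^ n'.+1) ^ m)%:R = (2 ^ m)%:R :> R.
Proof.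
rewrite expnS expnMn !natrM !natrX mulrCA -exprMn mulVf ?expr1n ?mulr1 //.
by rewrite expf_eq0 pnatr_eq0 andbF.
Qed.

Theorem theorem1p6 :
  forall k : nat, (2 <= k)%N ->
  exists C N : nat, (0 < C)%N /\
    forall n : nat, (N <= n)%N ->
    forall (R : realType) (m : nat) (Omega : finType) (p : Omega -> R)
           (A : Omega -> m.-tuple (assignment n) -> cnf n),
      prob_weights p ->
      (forall Phi : cnf n, kds_cnf k 1 0 Phi ->
         1 / 3 <= success_prob p A Phi) ->
      (trunc_log 2 n <= C * m)%N.
Proof.
move=> k k2; exists 3%N, (2 * k + 8)%N; split => //.
move=> [|n'] hn R m Omega p A pw succ; first by lia.
have := @key R n'.+1 m Omega p A _ (Phi k n') (((2 ^ n')%:R^-1) ^+ m) pw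
  (@inj_Phi k n') _ (@sp_bound R k n' m) (fun t => succ _ (kds_Phi t k2)).
rewrite card_ord card_tuple card_ffun card_bool card_ord powE.
rewrite ler_pdivrMr ?ltr0n // -natrM ler_nat => h; have {h} h : (n'.+1 - k.-1 <= 2 ^ m * 3)%N by apply: h; rewrite exprn_ge0 // invr_ge0 ler0n.
have tl := @trunc_logP 2 n'.+1 isT isT.
have m1 : (0 < m)%N.
  case: (posnP m) => // m0; rewrite m0 expn0 in h; lia.
have lt : (n'.+1 < 2 ^ (m + 3))%N.
  rewrite expnD (_ : (2 ^ 3 = 8)%N) //; lia.
have := leq_ltn_trans tl lt; rewrite ltn_exp2l // => ?; lia.
Qed.
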